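(* There exists a continuous function $f\colon[0,1]\to\mathbb{R}$ such that, with $x_n:=\sum_{k=1}^{n-1} f\big(\tfrac kn\big)$ and $y_n:=x_{n+1}-x_n$ for natural $n$, the limit $\lim_{n\to\infty} y_n$ does not exist. *)

(* Defs.v *)
From Stdlib Require Import Reals.
Open Scope R_scope.

Definition continuous_on_01 (f : R -> R) : Prop :=
  forall x, 0 <= x <= 1 ->
    forall eps, eps > 0 -> exists delta, delta > 0 /\
      forall y, 0 <= y <= 1 -> Rabs (y - x) < delta -> Rabs (f y - f x) < eps.

Fixpoint partial_sum (g : nat -> R) (m : nat) : R :=
  match m with
  | O => 0
  | S m' => partial_sum g m' + g m
  end.
(* partial_sum g m = g 1 + ... + g m *)

Definition xseq (f : R -> R) (n : nat) : R :=
  partial_sum (fun k => f (INR k / INR n)) (n - 1).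

Definition yseq (f : R -> R) (n : nat) : R := xseq f (S n) - xseq f n.

(* Main.v *)
Require Import Defs.
From Stdlib Require Import Reals Lra Lia ZArith.
From Coquelicot Require Import Coquelicot.
Open Scope R_scope.

Definition cc (l : nat) (x : R) : R := (/2)^l * cos (2*PI*(2^l*x)).
Definition ff (x : R) : R := Series (fun l => cc l x).

Lemma half_abs : Rabs (/2) < 1.
Proof. rewrite Rabs_pos_eq; lra. Qed.

Lemma ex_geom_scal (a : R) (j : nat) : ex_series (fun l => a * (/2)^(j + l)).
Proof.
  apply ex_series_ext with (a := fun l => scal (a * (/2)^j) ((/2)^l)).
  { intros l. rewrite pow_add. unfold scal; simpl. unfold mult; simpl. ring. }
  apply (@ex_series_scal_l R_AbsRing R_NormedModule). apply ex_series_geom. apply half_abs.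
Qed.

Lemma Series_geom_scal (a : R) (j : nat) : Series (fun l => a * (/2)^(j + l)) = 2 * a * (/2)^j.
Proof.
  rewrite (Series_ext _ (fun l => (a * (/2)^j) * (/2)^l)).
  2:{ intros l. rewrite pow_add. ring. }
  rewrite Series_scal_l, Series_geom. 2: apply half_abs. field.
Qed.

Lemma ex_zero : ex_series (fun _ : nat => 0).
Proof.
  apply ex_series_ext with (a := fun l => 0 * (/2)^(0 + l)).
  { intros n. apply Rmult_0_l. } apply ex_geom_scal.
Qed.

Lemma Series_zero : Series (fun _ : nat => 0) = 0.
Proof.
  rewrite (Series_ext _ (fun l => 0 * (/2)^(0 + l))). 2:{ intros; ring. }
  rewrite Series_geom_scal. ring.
Qed.

Lemma cc_bound l x : Rabs (cc l x) <= (/2)^l.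
Proof.
  unfold cc. rewrite Rabs_mult. rewrite (Rabs_pos_eq ((/2)^l)).
  2:{ apply pow_le; lra. }
  rewrite <- (Rmult_1_r ((/2)^l)) at 2. apply Rmult_le_compat_l.
  apply pow_le; lra. apply Rabs_le. apply COS_bound.
Qed.

Lemma ex_cc x : ex_series (fun l => cc l x).
Proof.
  apply (@ex_series_le R_AbsRing R_CompleteNormedModule) with (b := fun l => 1 * (/2)^(0+l)).
  { intros n. change (norm (cc n x)) with (Rabs (cc n x)). simpl. rewrite Rmult_1_l. apply cc_bound. }
  apply ex_geom_scal.
Qed.

Lemma cos_lip a b : Rabs (cos a - cos b) <= Rabs (a - b).
Proof.
  destruct (MVT_abs cos (fun c => - sin c) b a) as [c [Hc _]].
  { intros c _. apply derivable_pt_lim_cos. }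
  rewrite Hc. rewrite <- (Rmult_1_l (Rabs (a - b))) at 2.
  apply Rmult_le_compat_r. apply Rabs_pos.
  rewrite Rabs_Ropp. apply Rabs_le. apply SIN_bound.
Qed.

Lemma cc_lip l x y : Rabs (cc l y - cc l x) <= 2*PI*Rabs (y - x).
Proof.
  unfold cc. rewrite <- Rmult_minus_distr_l, Rabs_mult, (Rabs_pos_eq ((/2)^l)).
  2:{ apply pow_le; lra. }
  eapply Rle_trans. apply Rmult_le_compat_l. apply pow_le; lra. apply cos_lip.
  replace (2 * PI * (2 ^ l * y) - 2 * PI * (2 ^ l * x)) with ((2*PI) * (2^l) * (y - x)) by ring.
  rewrite !Rabs_mult. rewrite (Rabs_pos_eq (2^l)). 2:{ apply pow_le; lra. }
  rewrite (Rabs_pos_eq 2) by lra. rewrite (Rabs_pos_eq PI) by (pose proof PI_RGT_0; lra).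
  rewrite <- Rinv_pow by lra.
  right. field. apply pow_nonzero. lra.
Qed.

Lemma ff_diff x y L : Rabs (ff y - ff x) <= INR (S L) * (2*PI*Rabs (y-x)) + 4*(/2)^(S L).
Proof.
  unfold ff. rewrite <- Series_minus by apply ex_cc.
  set (d := fun l => cc l y - cc l x).
  assert (Hd : ex_series d) by (apply (@ex_series_minus R_AbsRing R_NormedModule); apply ex_cc).
  rewrite (Series_incr_n d (S L)) by (lia || exact Hd). simpl pred.
  eapply Rle_trans. apply Rabs_triang. apply Rplus_le_compat.
  - eapply Rle_trans. apply sum_f_R0_triangle.
    eapply Rle_trans. apply sum_Rle with (Bn := fun _ => 2*PI*Rabs (y-x)).
    { intros n _. apply cc_lip. }
    rewrite sum_cte. right; ring.
  - assert (Hb : forall k, Rabs (d (S L + k)%nat) <= 2 * (/2)^(S L + k)).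
    { intros k. unfold d. eapply Rle_trans. apply Rabs_triang.
      rewrite Rabs_Ropp. pose proof (cc_bound (S L + k) y). pose proof (cc_bound (S L + k) x). lra. }
    assert (Hex : ex_series (fun k => Rabs (d (S L + k)%nat))).
    { apply (@ex_series_le R_AbsRing R_CompleteNormedModule) with (b := fun k => 2 * (/2)^(S L + k)).
      { intros n. change (norm (Rabs (d (S L + n)%nat))) with (Rabs (Rabs (d (S L + n)%nat))).
        rewrite Rabs_Rabsolu. apply Hb. }
      apply ex_geom_scal. }
    eapply Rle_trans. apply Series_Rabs. exact Hex.
    eapply Rle_trans. apply Series_le with (b := fun k => 2 * (/2)^(S L + k)).
    { intros n. split. apply Rabs_pos. apply Hb. }
    apply ex_geom_scal.
    rewrite Series_geom_scal. right; ring.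
Qed.

Lemma ff_cont : continuous_on_01 ff.
Proof.
  intros x _ eps Heps.
  destruct (pow_lt_1_zero (/2) half_abs (eps/8)) as [N HN]. lra.
  pose proof PI_RGT_0 as HPI.
  assert (HL : 4 * (/2)^(S N) < eps/2).
  { specialize (HN (S N) ltac:(lia)). rewrite Rabs_pos_eq in HN by (apply pow_le; lra). lra. }
  assert (HS : 0 < INR (S N)) by (apply lt_0_INR; lia).
  exists (eps / (2 * (INR (S N) * (2 * PI)))). split.
  { apply Rdiv_lt_0_compat. lra. apply Rmult_lt_0_compat. lra. apply Rmult_lt_0_compat; lra. }
  intros y _ Hy.
  pose proof (ff_diff x y N) as H.
  assert (INR (S N) * (2 * PI * Rabs (y - x)) < eps/2).
  { replace (INR (S N) * (2 * PI * Rabs (y - x))) with ((INR (S N) * (2 * PI)) * Rabs (y - x)) by ring.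
    apply Rmult_lt_compat_l with (r := INR (S N) * (2 * PI)) in Hy.
    2:{ apply Rmult_lt_0_compat; lra. }
    replace (INR (S N) * (2 * PI) * (eps / (2 * (INR (S N) * (2 * PI))))) with (eps/2) in Hy by (field; lra).
    exact Hy. }
  lra.
Qed.

Lemma ps_ext (g h : nat -> R) j : (forall k, g k = h k) -> partial_sum g j = partial_sum h j.
Proof. intros H; induction j; simpl; [reflexivity | rewrite IHj, H; reflexivity]. Qed.

Lemma ps_scal (a : R) (g : nat -> R) j : partial_sum (fun k => a * g k) j = a * partial_sum g j.
Proof. induction j; simpl; [ring | rewrite IHj; ring]. Qed.

Lemma ps_series (u : nat -> nat -> R) m : (forall k, ex_series (u k)) ->
  partial_sum (fun k => Series (u k)) m = Series (fun l => partial_sum (fun k => u k l) m)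
  /\ ex_series (fun l => partial_sum (fun k => u k l) m).
Proof.
  intros Hu. induction m as [|m [IH1 IH2]]; simpl.
  - split. symmetry; apply Series_zero. apply ex_zero.
  - split.
    + rewrite IH1. rewrite <- Series_plus; auto.
    + apply (@ex_series_plus R_AbsRing R_NormedModule); auto.
Qed.

Definition P (l n : nat) : R :=
  partial_sum (fun k => cos (2*PI*(INR (2^l) * (INR k / INR n)))) (n-1).

Lemma xseq_eq n : xseq ff n = Series (fun l => (/2)^l * P l n)
  /\ ex_series (fun l => (/2)^l * P l n).
Proof.
  unfold xseq, ff.
  destruct (ps_series (fun k l => cc l (INR k / INR n)) (n-1)) as [H1 H2].
  { intros k. apply ex_cc. }
  assert (E : forall l, partial_sum (fun k => cc l (INR k / INR n)) (n - 1) = (/2)^l * P l n).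
  { intros l. unfold P. rewrite <- ps_scal. apply ps_ext. intros k. unfold cc.
    rewrite pow_INR. replace (INR 2) with 2 by (simpl; lra). reflexivity. }
  split.
  - rewrite H1. apply Series_ext. exact E.
  - eapply (@ex_series_ext R_AbsRing R_NormedModule). exact E. exact H2.
Qed.

Lemma cos_int (j : nat) : cos (2*PI*INR j) = 1.
Proof.
  replace (2*PI*INR j) with (0 + 2 * INR j * PI) by ring. rewrite cos_period. apply cos_0.
Qed.

Lemma sin_int (j : nat) : sin (2*PI*INR j) = 0.
Proof.
  replace (2*PI*INR j) with (0 + 2 * INR j * PI) by ring. rewrite sin_period. apply sin_0.
Qed.

Lemma ps_one j : partial_sum (fun _ => 1) j = INR j.
Proof. induction j; simpl partial_sum; [simpl; ring | rewrite IHj, S_INR; ring]. Qed.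

Lemma cos_sum_div m n : (0 < n)%nat -> Nat.divide n m ->
  partial_sum (fun k => cos (2*PI*(INR m * (INR k / INR n)))) (n-1) = INR n - 1.
Proof.
  intros Hn [q Hq].
  rewrite (ps_ext _ (fun _ => 1)).
  - rewrite ps_one, minus_INR by lia. simpl; ring.
  - intros k. rewrite Hq. replace (INR (q * n) * (INR k / INR n)) with (INR (q * k)).
    apply cos_int. rewrite !mult_INR. field. apply not_0_INR. lia.
Qed.

Lemma telesc (t : R) j : 2 * sin (t/2) * partial_sum (fun k => cos (INR k * t)) j
   = sin ((2 * INR j + 1) * (t/2)) - sin (t/2).
Proof.
  induction j.
  - simpl. replace ((2*0+1)*(t/2)) with (t/2) by ring. ring.
  - cbn [partial_sum]. rewrite Rmult_plus_distr_l, IHj.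
    assert (sin ((2 * INR (S j) + 1) * (t / 2)) - sin ((2 * INR j + 1) * (t / 2))
       = 2 * sin (t/2) * cos (INR (S j) * t)).
    { rewrite form4. rewrite S_INR.
      replace (((2 * (INR j + 1) + 1) * (t / 2) + (2 * INR j + 1) * (t / 2)) / 2) with ((INR j + 1) * t) by field.
      replace (((2 * (INR j + 1) + 1) * (t / 2) - (2 * INR j + 1) * (t / 2)) / 2) with (t/2) by field.
      ring. }
    rewrite <- H. ring.
Qed.

Lemma cos_sum_ndiv m n : (0 < n)%nat -> ~ Nat.divide n m ->
  partial_sum (fun k => cos (2*PI*(INR m * (INR k / INR n)))) (n-1) = -1.
Proof.
  intros Hn Hd.
  assert (Hn0 : INR n <> 0) by (apply not_0_INR; lia).
  set (t := 2*PI*INR m / INR n).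
  rewrite (ps_ext _ (fun k => cos (INR k * t))).
  2:{ intros k. unfold t. f_equal. field. exact Hn0. }
  assert (Hs : sin (t/2) <> 0).
  { intros H0. apply sin_eq_0_0 in H0. destruct H0 as [z Hz]. apply Hd.
    pose proof PI_RGT_0.
    assert (E : INR m = IZR z * INR n).
    { unfold t in Hz. apply (Rmult_eq_reg_r (PI / INR n)).
      2:{ apply Rgt_not_eq. apply Rdiv_lt_0_compat. lra. apply lt_0_INR; lia. }
      replace (IZR z * INR n * (PI / INR n)) with (IZR z * PI) by (field; exact Hn0).
      rewrite <- Hz. field. exact Hn0. }
    rewrite !INR_IZR_INZ, <- mult_IZR in E. apply eq_IZR in E.
    assert (Hz0 : (0 <= z)%Z).
    { assert (0 < Z.of_nat n)%Z by lia. assert (0 <= Z.of_nat m)%Z by lia.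
      destruct (Z_lt_le_dec z 0); [|assumption]. exfalso. nia. }
    exists (Z.to_nat z). apply Nat2Z.inj. rewrite Nat2Z.inj_mul, Z2Nat.id by exact Hz0. exact E. }
  pose proof (telesc t (n-1)) as Ht.
  replace ((2 * INR (n - 1) + 1) * (t / 2)) with (2*PI*INR m - t/2) in Ht.
  2:{ rewrite minus_INR by lia. unfold t. simpl. field. exact Hn0. }
  rewrite sin_minus, sin_int, cos_int in Ht.
  apply (Rmult_eq_reg_l (2 * sin (t/2))). rewrite Ht. ring.
  intros H; apply Hs; lra.
Qed.

Lemma odd_ndiv n l : (1 < n)%nat -> (exists t, n = 2*t+1)%nat -> ~ Nat.divide n (2^l).
Proof.
  intros H1 [t Ht]. induction l as [|l IH]; intros Hd.
  - apply Nat.divide_pos_le in Hd; simpl in *; lia.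
  - apply IH. rewrite Nat.pow_succ_r' in Hd. destruct Hd as [q Hq].
    destruct (Nat.Even_or_Odd q) as [[r Hr]|[r Hr]].
    + exists r. nia.
    + exfalso. subst. nia.
Qed.

Lemma geo_sum j : sum_f_R0 (fun l => (/2)^l) j = 2 - 2 * (/2)^(S j).
Proof. induction j; simpl sum_f_R0. simpl; field. rewrite IHj. simpl. field. Qed.

Lemma half_pow i : (/2)^i * INR (2^i) = 1.
Proof. rewrite pow_INR. replace (INR 2) with 2 by (simpl; lra). rewrite <- Rinv_pow by lra. field. apply pow_nonzero; lra. Qed.

Lemma x_odd n : (1 < n)%nat -> (exists t, n = 2*t+1)%nat -> xseq ff n = -2.
Proof.
  intros H1 Ho. destruct (xseq_eq n) as [E _]. rewrite E.
  rewrite (Series_ext _ (fun l => (-1) * (/2)^(0 + l))).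
  - rewrite Series_geom_scal. simpl; ring.
  - intros l. unfold P. rewrite cos_sum_ndiv by (lia || apply odd_ndiv; auto). simpl; ring.
Qed.

Lemma x_pow i : (0 < i)%nat -> xseq ff (2^i) = 0.
Proof.
  intros Hi. destruct (xseq_eq (2^i)) as [E Ex]. rewrite E.
  assert (Hp : (0 < 2^i)%nat) by (apply Nat.neq_0_lt_0; apply Nat.pow_nonzero; lia).
  rewrite (Series_incr_n _ i Hi Ex).
  rewrite (sum_eq _ (fun l => (/2)^l * (-1))).
  2:{ intros l Hl. unfold P. rewrite cos_sum_ndiv; [ring | exact Hp | ].
      intros Hd. apply Nat.divide_pos_le in Hd. 2: (apply Nat.neq_0_lt_0; apply Nat.pow_nonzero; lia).
      assert (2^l < 2^i)%nat by (apply Nat.pow_lt_mono_r; lia). lia. }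
  rewrite (Series_ext _ (fun k => (1 - (/2)^i) * (/2)^(0 + k))).
  2:{ intros k. unfold P. rewrite cos_sum_div; auto.
      2:{ exists (2^k)%nat. rewrite <- Nat.pow_add_r. f_equal. lia. }
      rewrite pow_add. simpl. pose proof (half_pow i). 
      replace ((/2)^i * (/2)^k * (INR (2^i) - 1)) with ((/2)^i * INR (2^i) * (/2)^k - (/2)^i * (/2)^k) by ring.
      rewrite H. ring. }
  rewrite Series_geom_scal. rewrite <- scal_sum, geo_sum.
  replace (S (pred i)) with i by lia. simpl. ring.
Qed.

Theorem theorem1 :
  exists f : R -> R, continuous_on_01 f /\ ~ (exists l : R, Un_cv (yseq f) l).
Proof.
  exists ff. split. apply ff_cont.
  intros [l Hl]. destruct (Hl 1 ltac:(lra)) as [N HN].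
  set (i := (N + 2)%nat).
  assert (Hi : (4 <= 2^i /\ N < 2^i)%nat).
  { unfold i. rewrite Nat.pow_add_r. pose proof (Nat.pow_gt_lin_r 2 N ltac:(lia)). simpl. lia. }
  assert (He : exists t, (2^i = 2 * t)%nat).
  { exists (2^(N+1))%nat. unfold i. replace (N+2)%nat with (S (N+1)) by lia. apply Nat.pow_succ_r'. }
  destruct He as [t Ht].
  pose proof (HN (2^i)%nat ltac:(lia)) as A.
  pose proof (HN (2^i - 1)%nat ltac:(lia)) as B.
  unfold R_dist, yseq in A, B.
  rewrite x_pow in A by (unfold i; lia).
  rewrite x_odd in A by (lia || (exists t; lia)).
  replace (S (2^i - 1)) with (2^i)%nat in B by lia.
  rewrite x_pow in B by (unfold i; lia).
  rewrite x_odd in B by (lia || (exists (t-1)%nat; lia)).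
  apply Rabs_def2 in A. apply Rabs_def2 in B. lra.
Qed.
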